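(* Every $P$-faithful real quadratic form $f$ on $\mathbb R^n$ is antimonotonous.
   Context: $P_n=\{x\in\mathbb R^n:x_i>0,\ \sum x_i=1\}$, $\overline P_n=\{x: x_i\ge0,\ \sum x_i=1\}$. A continuous $f$ is $P$-faithful if $\min_{\overline P_n}f>0$ and this minimum is not attained on $\overline P_n\setminus P_n$. $H_n=\{x:\sum x_i=0\}$; $C(f)$ is the set of $h\in H_n\setminus\{0\}$ such that either $\partial f/\partial x_i(h)\le 0$ for all $i$ or $\partial f/\partial x_i(h)\ge0$ for all $i$. $f$ is antimonotonous if $C(f)=\varnothing$. *)

(* Defs.v *)
From HB Require Import structures.
From mathcomp Require Import all_boot all_order all_algebra.
From mathcomp Require Import all_classical all_reals all_analysis.
Set Implicit Arguments. Unset Strict Implicit. Unset Printing Implicit Defensive.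
Import Order.TTheory GRing.Theory Num.Theory.
Import numFieldNormedType.Exports.
Local Open Scope ring_scope.

Definition qform (R : realType) (n : nat) (A : 'M[R]_n) : 'rV[R]_n -> R :=
  fun x => \sum_(i < n) \sum_(j < n) A i j * x 0 i * x 0 j.

Definition Psimplex (R : realType) (n : nat) (x : 'rV[R]_n) : Prop :=
  (forall i, 0 < x 0 i) /\ \sum_(i < n) x 0 i = 1.

Definition Pbar (R : realType) (n : nat) (x : 'rV[R]_n) : Prop :=
  (forall i, 0 <= x 0 i) /\ \sum_(i < n) x 0 i = 1.

Definition P_faithful (R : realType) (n : nat) (f : 'rV[R]_n -> R) : Prop :=
  (exists x0, Pbar x0 /\ (forall y, Pbar y -> f x0 <= f y) /\ 0 < f x0) /\
  (forall x, Pbar x -> (forall y, Pbar y -> f x <= f y) -> Psimplex x).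

Definition Hn (R : realType) (n : nat) (h : 'rV[R]_n) : Prop :=
  \sum_(i < n) h 0 i = 0.

Definition partial (R : realType) (n : nat) (f : 'rV[R]_n -> R) (i : 'I_n)
  (h : 'rV[R]_n) : R := 'D_(delta_mx 0 i) f h.

Definition Cset (R : realType) (n : nat) (f : 'rV[R]_n -> R) (h : 'rV[R]_n) : Prop :=
  Hn h /\ h <> 0 /\
  ((forall i, partial f i h <= 0) \/ (forall i, 0 <= partial f i h)).

Definition antimonotonous (R : realType) (n : nat) (f : 'rV[R]_n -> R) : Prop :=
  forall h, ~ Cset f h.

(* Main.v *)
Require Import Defs.
From mathcomp Require Import all_boot all_order all_algebra.
From mathcomp Require Import all_classical all_reals all_analysis.
From mathcomp Require Import ring lra.
Set Implicit Arguments. Unset Strict Implicit. Unset Printing Implicit Defensive.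
Import Order.TTheory GRing.Theory Num.Theory.
Import numFieldNormedType.Exports.
Local Open Scope ring_scope.
Local Open Scope classical_set_scope.

Section S.
Variables (R : realType) (n : nat) (A : 'M[R]_n).

Definition gg (h : 'rV[R]_n) (i : 'I_n) := \sum_(j < n) (A i j + A j i) * h 0 j.
Definition BB (x h : 'rV[R]_n) :=
  \sum_(i < n) \sum_(j < n) A i j * (x 0 i * h 0 j + h 0 i * x 0 j).

Lemma qform_expand x h t :
  qform A (x + t *: h) = qform A x + t * BB x h + t ^+ 2 * qform A h.
Proof.
rewrite /qform /BB !mulr_sumr -!big_split; apply: eq_bigr => i _ /=.
rewrite !mulr_sumr -!big_split; apply: eq_bigr => j _ /=.
rewrite !mxE; ring.
Qed.

Lemma BB_g x h : BB x h = \sum_(i < n) x 0 i * gg h i.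
Proof.
transitivity (\sum_(i < n) \sum_(j < n) A i j * x 0 i * h 0 j
            + \sum_(i < n) \sum_(j < n) A j i * x 0 i * h 0 j).
  rewrite [X in _ = _ + X]exchange_big /= -big_split; apply: eq_bigr => i _ /=.
  rewrite -big_split; apply: eq_bigr => j _ /=; ring.
rewrite -big_split; apply: eq_bigr => i _ /=.
rewrite /gg mulr_sumr -big_split; apply: eq_bigr => j _ /=; ring.
Qed.

Lemma BB_sym x h : BB x h = BB h x.
Proof. by apply: eq_bigr => i _; apply: eq_bigr => j _; rewrite addrC. Qed.

Lemma BB_delta h i : BB h (delta_mx 0 i) = gg h i.
Proof.
rewrite BB_sym BB_g (bigD1 i) //= mxE !eqxx mul1r big1 ?addr0 // => k /negbTE kn.
by rewrite mxE kn andbF mul0r.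
Qed.

Lemma BB_self h : BB h h = 2 * qform A h.
Proof.
rewrite /BB /qform mulr_sumr; apply: eq_bigr => i _.
rewrite mulr_sumr; apply: eq_bigr => j _; ring.
Qed.

Lemma partialE i h : partial (qform A) i h = gg h i.
Proof.
rewrite /partial /derive; apply: cvg_lim => //.
set c := qform A (delta_mx 0 i).
have H : (fun t : R => gg h i + t * c) @ 0^' --> gg h i.
  rewrite -[X in _ --> X](addr0 (gg h i)) -[X in _ --> _ + X](mul0r c).
  apply: cvg_within_filter; apply: cvgD; first exact: cvg_cst.
  apply: cvgMr_tmp; exact: cvg_id.
apply: (cvg_trans _ H); apply: near_eq_cvg; near=> t.
have tn0 : t != 0 by near: t; exact: nbhs_dnbhs_neq.
rewrite /= [_ + h]addrC qform_expand BB_delta -/c.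
have -> : forall y : R, t^-1 *: y = t^-1 * y by [].
by field.
Unshelve. all: end_near.
Qed.


Lemma lower_bound (F : 'I_n -> R) : (forall i, 0 < F i) ->
  exists d, 0 < d /\ forall i, d <= F i.
Proof.
move=> Fpos; set S := \sum_(i < n) (F i)^-1.
have S0 : 0 <= S by apply: sumr_ge0 => i _; rewrite invr_ge0; exact: ltW.
exists (1 / (1 + S)); split; first by rewrite divr_gt0 // ltr_pwDl.
move=> i; rewrite ler_pdivrMr; last by rewrite ltr_pwDl.
have h1 : (F i)^-1 <= S.
  rewrite /S (bigD1 i) //= lerDl; apply: sumr_ge0 => k _; rewrite invr_ge0; exact: ltW.
have h2 : F i * (F i)^-1 = 1 by rewrite mulfV // gt_eqF.
have := Fpos i; nra.
Qed.

End S.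

Theorem corollary2 (R : realType) (n : nat) (A : 'M[R]_n) :
  P_faithful (qform A) -> antimonotonous (qform A).
Proof.
move=> [[x0 [Px0 [minx0 pos]]] allint] h [Hh [hn0 sgn]].
have [x0pos x0sum] := allint x0 Px0 minx0.
set m := qform A x0.
have key : forall k : 'rV[R]_n, Hn k -> k <> 0 -> (forall i, 0 <= gg A k i) -> False.
  move=> k Hk kn0 gpos.
  have line : forall t, (forall i, 0 <= x0 0 i + t * k 0 i) -> Pbar (x0 + t *: k).
    move=> t Ht; split => [i|]; first by rewrite !mxE.
    under eq_bigr do rewrite !mxE.
    by rewrite big_split /= -mulr_sumr x0sum Hk mulr0 addr0.
  set a := BB A x0 k. set b := qform A k.
  have fexp : forall t, qform A (x0 + t *: k) = m + t * a + t ^+ 2 * b.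
    by move=> t; rewrite qform_expand.
  have a_ge0 : 0 <= a.
    by rewrite /a BB_g; apply: sumr_ge0 => i _; apply: mulr_ge0; [exact: ltW | exact: gpos].
  have a0 : a = 0.
    apply/eqP; rewrite eq_le a_ge0 andbT leNgt; apply/negP => apos.
    have [d [dpos dle]] := lower_bound x0pos.
    set M := 1 + \sum_i `|k 0 i|.
    have S0 : 0 <= \sum_i `|k 0 i| by apply: sumr_ge0 => i _.
    have Mpos : 0 < M by rewrite ltr_pwDl.
    have Mge : forall i, `|k 0 i| <= M.
      move=> i; rewrite /M (bigD1 i) //= addrCA lerDl.
      by apply: addr_ge0 => //; apply: sumr_ge0 => j _.
    set s := d / M.
    have spos : 0 < s by rewrite divr_gt0.
    have sM : s * M = d by rewrite /s divfK // gt_eqF.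
    have sk : forall i, s * `|k 0 i| <= x0 0 i.
      move=> i; apply: le_trans (dle i); rewrite -sM ler_pM2l //.
    set D := a + s * `|b|.
    have Dpos : 0 < D by rewrite /D ltr_pwDl // mulr_ge0 // ltW.
    set e := s * a / D.
    have eD : e * D = s * a by rewrite /e divfK // gt_eqF.
    have epos : 0 < e by rewrite /e divr_gt0 // mulr_gt0.
    have es : e <= s.
      rewrite /e ler_pdivrMr // /D; have := normr_ge0 b; nra.
    have Py : Pbar (x0 + (- e) *: k).
      apply: line => i.
      have := sk i; have := ler_norm (k 0 i); have := normr_ge0 (k 0 i); nra.
    have := minx0 _ Py; rewrite fexp => h1.
    have hb := ler_norm b.
    have hb2 : e ^+ 2 * b <= e ^+ 2 * `|b| by rewrite ler_wpM2l // sqr_ge0.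
    rewrite sqrrN in h1.
    have h2 : e * a <= e * (e * `|b|).
      rewrite -/m in h1; rewrite mulrA -expr2; lra.
    have h3 : a <= e * `|b| by rewrite -(ler_pM2l epos).
    have h4 : a * D <= e * `|b| * D by rewrite ler_pM2r.
    rewrite mulrAC eD /D in h4.
    nra.
  have g0 : forall i, gg A k i = 0.
    have : \sum_i x0 0 i * gg A k i = 0 by rewrite -BB_g.
    move/psumr_eq0P => H i.
    have := H (fun i _ => mulr_ge0 (ltW (x0pos i)) (gpos i)) i isT.
    move/eqP; rewrite mulf_eq0 => /orP [/eqP x0i|/eqP //].
    by have := x0pos i; rewrite x0i ltxx.
  have b0 : b = 0.
    have : BB A k k = 0 by rewrite BB_g big1 // => i _; rewrite g0 mulr0.
    by rewrite BB_self => /eqP; rewrite mulf_eq0 pnatr_eq0 /= => /eqP.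
  have fconst : forall t, qform A (x0 + t *: k) = m.
    by move=> t; rewrite fexp a0 b0 mulr0 mulr0 !addr0.
  have [j kj] : exists j, k 0 j < 0.
    case: (pselect (exists j, k 0 j < 0)) => // nj; exfalso; apply: kn0.
    have kge : forall i, 0 <= k 0 i.
      by move=> i; rewrite leNgt; apply/negP => ?; apply: nj; exists i.
    apply/rowP => i; rewrite mxE.
    exact: (psumr_eq0P (fun i _ => kge i) Hk).
  set F := fun i => x0 0 i / - k 0 i.
  case: (@arg_minP _ R _ j (fun i => k 0 i < 0) F kj) => i0 /= ki0 Hmin.
  set t := F i0.
  have tpos : 0 < t by rewrite /t /F divr_gt0 // oppr_gt0.
  have Py : Pbar (x0 + t *: k).
    apply: line => i.
    case: (ltP (k 0 i) 0) => ki.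
      have := Hmin i ki; rewrite /F ler_pdivlMr ?oppr_gt0 // => hh.
      have hh2 : t * - k 0 i <= x0 0 i := hh. nra.
    by apply: addr_ge0; [exact: ltW | apply: mulr_ge0 => //; exact: ltW].
  have miny : forall z, Pbar z -> qform A (x0 + t *: k) <= qform A z.
    by move=> z Pz; rewrite fconst; exact: minx0.
  have [ypos _] := allint _ Py miny.
  have := ypos i0; rewrite !mxE /t /F.
  have -> : x0 0 i0 + x0 0 i0 / - k 0 i0 * k 0 i0 = 0.
    by field; rewrite lt_eqF.
  by rewrite ltxx.
case: sgn => Hs.
  apply: (key (-h)).
  - rewrite /Hn; under eq_bigr do rewrite mxE.
    by rewrite sumrN Hh oppr0.
  - by move/eqP; rewrite oppr_eq0 => /eqP.
  - move=> i; rewrite /gg; under eq_bigr do rewrite mxE mulrN.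
    by rewrite sumrN oppr_ge0; have := Hs i; rewrite partialE.
by apply: (key h) => // i; have := Hs i; rewrite partialE.
Qed.
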